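(* Let $\kappa\ge3$ and let $X_t$ be the walk with wall defined below. Define $P_*^{(E)}(x)=\lim_{t\to\infty}P(X_{2t}=x)$ and $P_*^{(O)}(x)=\lim_{t\to\infty}P(X_{2t+1}=x)$ for $x\in\mathbb{Z}_+$. Then these limits exist and: (1) (Case (A), $\gamma=0$) $P_*^{(E)}(x)=P_*^{(O)}(x)=0$ for all $x\ge0$. (2) (Case (B), $\gamma=\pi$) For even $x$: $P_*^{(E)}(x)=\left(\frac{\kappa-2}{\kappa-1}\right)^2\left\{\delta_0(x)+(1-\delta_0(x))\,\kappa\left(\frac{1}{\kappa-1}\right)^x\right\}$, and $P_*^{(E)}(x)=0$ for odd $x$; for odd $x$: $P_*^{(O)}(x)=\kappa\left(\frac{\kappa-2}{\kappa-1}\right)^2\left(\frac{1}{\kappa-1}\right)^x$, and $P_*^{(O)}(x)=0$ for even $x$. Here $\delta_0(x)=1$ if $x=0$ and $0$ otherwise.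
   Context: Walk with wall on $\mathbb{Z}_+=\{0,1,2,\dots\}$: fix $\kappa\ge3$, let $a_\kappa=2\sqrt{\kappa-1}/\kappa$, $b_\kappa=1-2/\kappa$, $\gamma\in\mathbb{R}$. Consider the Hilbert space with orthonormal basis $\{|0,L\rangle\}\cup\{|x,L\rangle,|x,R\rangle: x\ge1\}$ and the unitary $\widetilde U$ given by $\widetilde U|0,L\rangle=e^{i\gamma}|1,R\rangle$ and, for $x\ge1$, $\widetilde U|x,L\rangle=a_\kappa|x-1,L\rangle+b_\kappa|x+1,R\rangle$, $\widetilde U|x,R\rangle=-b_\kappa|x-1,L\rangle+a_\kappa|x+1,R\rangle$. With $\Phi_t=\widetilde U^t|0,L\rangle$, the random variable $X_t$ on $\mathbb{Z}_+$ has $P(X_t=0)=|\langle 0,L|\Phi_t\rangle|^2$ and $P(X_t=x)=|\langle x,L|\Phi_t\rangle|^2+|\langle x,R|\Phi_t\rangle|^2$ for $x\ge1$. Case (A) is $\gamma=0$ and Case (B) is $\gamma=\pi$. (These correspond to the distance from the root of the Grover walk on the $\kappa$-regular Cayley tree started at the root with uniform coin state $(1/\sqrt\kappa,\dots,1/\sqrt\kappa)$, resp. coin state $(\omega_\kappa^j/\sqrt\kappa)_{j=0}^{\kappa-1}$, $\omega_\kappa=e^{2\pi i/\kappa}$.) *)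

(* Defs.v *)
From Stdlib Require Import Reals.
Open Scope R_scope.

Definition C := (R * R)%type.
Definition C0 : C := (0, 0).
Definition C1 : C := (1, 0).
Definition Cadd (z w : C) : C := (fst z + fst w, snd z + snd w).
Definition Cmul (z w : C) : C :=
  (fst z * fst w - snd z * snd w, fst z * snd w + snd z * fst w).
Definition Cscal (r : R) (z : C) : C := (r * fst z, r * snd z).
Definition Cnorm2 (z : C) : R := fst z * fst z + snd z * snd z.
Definition Cexpi (g : R) : C := (cos g, sin g).

Definition a_k (k : nat) : R := 2 * sqrt (INR k - 1) / INR k.
Definition b_k (k : nat) : R := 1 - 2 / INR k.

(* A state: amplitudes on |x,L> (x >= 0) and |x,R> (x >= 1);
   the R-amplitude at x = 0 is not a basis vector and is kept equal to 0. *)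
Definition state := ((nat -> C) * (nat -> C))%type.

Definition step (k : nat) (g : R) (s : state) : state :=
  let (L, Rr) := s in
  ( fun x => Cadd (Cscal (a_k k) (L (S x))) (Cscal (- b_k k) (Rr (S x))),
    fun x => match x with
             | O => C0
             | S O => Cmul (Cexpi g) (L O)
             | S (S y as x') => Cadd (Cscal (b_k k) (L x')) (Cscal (a_k k) (Rr x'))
             end ).

Definition init : state := (fun x => match x with O => C1 | _ => C0 end, fun _ => C0).

Fixpoint Phi (k : nat) (g : R) (t : nat) : state :=
  match t with
  | O => init
  | S t' => step k g (Phi k g t')
  end.

Definition prob (k : nat) (g : R) (t x : nat) : R :=
  match x with
  | O => Cnorm2 (fst (Phi k g t) O)
  | _ => Cnorm2 (fst (Phi k g t) x) + Cnorm2 (snd (Phi k g t) x)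
  end.

Definition delta0 (x : nat) : R := match x with O => 1 | _ => 0 end.

Definition PE_B (k x : nat) : R :=
  if Nat.even x then
    ((INR k - 2) / (INR k - 1)) ^ 2 *
      (delta0 x + (1 - delta0 x) * INR k * (1 / (INR k - 1)) ^ x)
  else 0.
Definition PO_B (k x : nat) : R :=
  if Nat.even x then 0
  else INR k * ((INR k - 2) / (INR k - 1)) ^ 2 * (1 / (INR k - 1)) ^ x.

(* Main.v *)
Require Import Defs.
From Stdlib Require Import Reals Lra Lia Psatz FunctionalExtensionality Ring Arith.
Open Scope R_scope.


Fixpoint sumn (f : nat -> R) (n : nat) : R :=
  match n with O => 0 | S n' => sumn f n' + f n' end.

Lemma sumn_ext f g n : (forall i, (i < n)%nat -> f i = g i) -> sumn f n = sumn g n.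
Proof. induction n; simpl; intros H; auto. rewrite IHn by (intros; apply H; lia). rewrite H by lia; reflexivity. Qed.

Lemma sumn_plus f g n : sumn (fun i => f i + g i) n = sumn f n + sumn g n.
Proof. induction n; simpl; [ring|rewrite IHn; ring]. Qed.

Lemma sumn_scal c f n : sumn (fun i => c * f i) n = c * sumn f n.
Proof. induction n; simpl; [ring|rewrite IHn; ring]. Qed.

Lemma sumn_zero n : sumn (fun _ => 0) n = 0.
Proof. induction n; simpl; [ring|rewrite IHn; ring]. Qed.

Lemma sumn_front g n : sumn g (S n) = g 0%nat + sumn (fun i => g (S i)) n.
Proof. induction n; simpl in *; [ring|]. rewrite IHn; ring. Qed.

Lemma sumn_S f n : sumn f (S n) = sumn f n + f n.
Proof. reflexivity. Qed.

Lemma sumn_rev f n : sumn f n = sumn (fun i => f (n - 1 - i)%nat) n.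
Proof.
  induction n; [reflexivity|].
  rewrite (sumn_front (fun i => f (S n - 1 - i)%nat)). rewrite sumn_S, IHn.
  replace (S n - 1 - 0)%nat with n by lia. rewrite Rplus_comm. f_equal.
  apply sumn_ext; intros i _. f_equal; lia.
Qed.

Lemma sumn_le f g n : (forall i, (i < n)%nat -> f i <= g i) -> sumn f n <= sumn g n.
Proof. induction n; simpl; intros H; [lra|]. assert (f n <= g n) by (apply H; lia).
  assert (sumn f n <= sumn g n) by (apply IHn; intros; apply H; lia). lra. Qed.

Lemma sumn_abs f n : Rabs (sumn f n) <= sumn (fun i => Rabs (f i)) n.
Proof. induction n; simpl. rewrite Rabs_R0; lra.
  eapply Rle_trans; [apply Rabs_triang|]. lra. Qed.

Lemma sumn_nonneg f n : (forall i, 0 <= f i) -> 0 <= sumn f n.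
Proof. intros H; induction n; simpl; [lra|]. specialize (H n); lra. Qed.

Lemma sumn_mono f j n : (forall i, 0 <= f i) -> (j <= n)%nat -> sumn f j <= sumn f n.
Proof. intros H Hj. induction Hj; [lra|]. simpl. specialize (H m); lra. Qed.

Lemma tri F n : sumn (fun p => sumn (fun i => F i (p - i)%nat) (S p)) (S n)
  = sumn (fun i => sumn (fun j => F i j) (S (n - i))) (S n).
Proof.
  induction n.
  - simpl. ring.
  - rewrite sumn_S, IHn.
    rewrite (sumn_S (fun i => sumn (fun j => F i j) (S (S n - i)))).
    rewrite (sumn_ext (fun i => sumn (fun j => F i j) (S (S n - i)))
                      (fun i => sumn (fun j => F i j) (S (n - i)) + F i (S n - i)%nat)).
    2:{ intros i Hi. replace (S n - i)%nat with (S (n - i)) by lia. rewrite sumn_S. f_equal. }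
    rewrite sumn_plus. rewrite (sumn_S (fun i => F i (S n - i)%nat)).
    replace (S n - S n)%nat with 0%nat by lia. simpl (sumn (fun j => F (S n) j) (S 0)). ring.
Qed.


Definition ser := nat -> R.
Definition sadd (u v : ser) : ser := fun n => u n + v n.
Definition sopp (u : ser) : ser := fun n => - u n.
Definition ssub (u v : ser) : ser := sadd u (sopp v).
Definition cst (c : R) : ser := fun n => match n with O => c | _ => 0 end.
Definition s0 : ser := cst 0.
Definition s1 : ser := cst 1.
Definition conv (u v : ser) : ser := fun n => sumn (fun i => u i * v (n - i)%nat) (S n).

Lemma conv_comm u v : conv u v = conv v u.
Proof.
  extensionality n. unfold conv. rewrite sumn_rev. apply sumn_ext; intros i Hi.
  replace (S n - 1 - i)%nat with (n - i)%nat by lia. replace (n - (n - i))%nat with i by lia. ring.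
Qed.

Lemma conv_assoc u v w : conv u (conv v w) = conv (conv u v) w.
Proof.
  extensionality n. unfold conv.
  pose (F := fun i j => u i * v j * w (n - i - j)%nat).
  transitivity (sumn (fun i => sumn (fun j => F i j) (S (n - i))) (S n)).
  { apply sumn_ext; intros i Hi. rewrite <- sumn_scal. apply sumn_ext; intros j Hj.
    unfold F. replace (n - i - j)%nat with (n - i - j)%nat by lia. ring. }
  rewrite <- tri. apply sumn_ext; intros p Hp. rewrite Rmult_comm, <- sumn_scal. apply sumn_ext; intros i Hi.
  unfold F. replace (n - i - (p - i))%nat with (n - p)%nat by lia. ring.
Qed.

Lemma conv_1_l u : conv s1 u = u.
Proof. extensionality n. unfold conv. rewrite sumn_front. simpl.
  rewrite (sumn_ext _ (fun _ => 0)) by (intros; ring). rewrite sumn_zero. replace (n-0)%nat with n by lia; ring. Qed.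

Lemma conv_distr_l u v w : conv (sadd u v) w = sadd (conv u w) (conv v w).
Proof. extensionality n. unfold conv, sadd. rewrite <- sumn_plus. apply sumn_ext; intros; ring. Qed.

Lemma ser_ring : ring_theory s0 s1 sadd conv ssub sopp (@eq ser).
Proof.
  constructor.
  - intros; extensionality n; unfold sadd, s0, cst; destruct n; ring.
  - intros; extensionality n; unfold sadd; ring.
  - intros; extensionality n; unfold sadd; ring.
  - apply conv_1_l.
  - apply conv_comm.
  - apply conv_assoc.
  - apply conv_distr_l.
  - reflexivity.
  - intros; extensionality n; unfold sadd, sopp, s0, cst; destruct n; ring.
Qed.

Add Ring serR : ser_ring.

Declare Scope ser_scope.
Delimit Scope ser_scope with S.
Infix "+" := sadd : ser_scope.
Infix "*" := conv : ser_scope.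
Infix "-" := ssub : ser_scope.
Notation "- u" := (sopp u) : ser_scope.

Definition X : ser := fun n => match n with 1%nat => 1 | _ => 0 end.
Definition shiftL (u : ser) : ser := fun n => u (S n).
Definition ones : ser := fun _ => 1.

Lemma conv_cst_l c u n : conv (cst c) u n = c * u n.
Proof. unfold conv. rewrite sumn_front. simpl.
  rewrite (sumn_ext _ (fun _ => 0)) by (intros; ring). rewrite sumn_zero. replace (n-0)%nat with n by lia; ring. Qed.

Lemma conv_X_l u n : conv X u n = match n with O => 0 | S m => u m end.
Proof. unfold conv. destruct n. simpl; ring. rewrite sumn_front, sumn_front. simpl.
  rewrite (sumn_ext _ (fun _ => 0)) by (intros; ring). rewrite sumn_zero. replace (n-0)%nat with n by lia; ring. Qed.

Lemma cst_add c d : cst (c + d) = (cst c + cst d)%S.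
Proof. extensionality n; unfold sadd, cst; destruct n; ring. Qed.
Lemma cst_mul c d : cst (c * d) = (cst c * cst d)%S.
Proof. extensionality n; rewrite conv_cst_l; unfold cst; destruct n; ring. Qed.
Lemma cst_opp c : cst (- c) = (- cst c)%S.
Proof. extensionality n; unfold sopp, cst; destruct n; ring. Qed.
Lemma cst_sub c d : cst (c - d) = (cst c - cst d)%S.
Proof. unfold Rminus; rewrite cst_add, cst_opp; reflexivity. Qed.

Lemma X_shiftL u : (X * shiftL u = u - cst (u 0%nat))%S.
Proof. extensionality n; rewrite conv_X_l; unfold ssub, sadd, sopp, cst, shiftL; destruct n; ring. Qed.

Lemma X_cancel u v : (X * u = X * v)%S -> u = v.
Proof. intros H; extensionality n. assert (E := f_equal (fun f => f (S n)) H). simpl in E.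
  rewrite !conv_X_l in E. exact E. Qed.

Lemma ones_X : ((s1 - X) * ones = s1)%S.
Proof. extensionality n. unfold ssub. rewrite conv_distr_l. unfold sadd.
  replace (sopp X) with (conv (cst (-1)) X) by (extensionality m; rewrite conv_cst_l; unfold sopp; ring).
  rewrite <- conv_assoc, conv_cst_l, conv_1_l, conv_X_l. unfold ones, s1, cst; destruct n; ring. Qed.

Lemma conv_ones_r u n : conv u ones n = sumn u (S n).
Proof. unfold conv, ones. apply sumn_ext; intros; ring. Qed.


Definition HasSum (u : ser) (l : R) := Un_cv (fun n => sumn u n) l.
Definition L1 (u : ser) := exists M, forall n, sumn (fun i => Rabs (u i)) n <= M.

Lemma Un_cv_ext f g l : (forall n, f n = g n) -> Un_cv f l -> Un_cv g l.
Proof. intros E H eps He. destruct (H eps He) as [N HN]. exists N; intros n Hn. rewrite <- E; auto. Qed.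

Lemma Un_cv_S f l : Un_cv f l -> Un_cv (fun n => f (S n)) l.
Proof. intros H eps He. destruct (H eps He) as [N HN]. exists N; intros n Hn. apply HN; lia. Qed.

Lemma Un_cv_const c : Un_cv (fun _ => c) c.
Proof. intros eps He. exists 0%nat; intros. unfold Rdist. replace (c - c) with 0 by ring. rewrite Rabs_R0; lra. Qed.

Lemma Un_cv_eventually f g l N0 : (forall n, (n >= N0)%nat -> f n = g n) -> Un_cv f l -> Un_cv g l.
Proof. intros E H eps He. destruct (H eps He) as [N HN]. exists (N + N0)%nat; intros n Hn.
  rewrite <- E by lia. apply HN; lia. Qed.

Lemma HasSum_plus u v a b : HasSum u a -> HasSum v b -> HasSum (u + v)%S (a + b).
Proof. intros Ha Hb. eapply Un_cv_ext; [|apply CV_plus; [exact Ha|exact Hb]].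
  intros n; simpl. unfold sadd. rewrite sumn_plus. reflexivity. Qed.

Lemma HasSum_scal c u a : HasSum u a -> HasSum (cst c * u)%S (c * a).
Proof. intros Ha. eapply Un_cv_ext; [|apply CV_mult; [apply Un_cv_const|exact Ha]].
  intros n; simpl. rewrite <- sumn_scal. apply sumn_ext; intros; rewrite conv_cst_l; reflexivity. Qed.

Lemma HasSum_opp u a : HasSum u a -> HasSum (- u)%S (- a).
Proof. intros Ha. replace (- u)%S with (cst (-1) * u)%S. replace (-a) with (-1 * a) by ring. apply HasSum_scal; auto.
  extensionality n. rewrite conv_cst_l. unfold sopp; ring. Qed.

Lemma HasSum_sub u v a b : HasSum u a -> HasSum v b -> HasSum (u - v)%S (a - b).
Proof. intros. unfold ssub, Rminus. apply HasSum_plus; auto. apply HasSum_opp; auto. Qed.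

Lemma HasSum_cst c : HasSum (cst c) c.
Proof. apply (Un_cv_eventually (fun _ => c) _ _ 1%nat). intros n Hn. destruct n; [lia|].
  rewrite sumn_front. rewrite (sumn_ext (fun i => cst c (S i)) (fun _ => 0)) by (intros; reflexivity). rewrite sumn_zero; simpl; ring.
  apply Un_cv_const. Qed.

Lemma HasSum_X : HasSum X 1.
Proof. apply (Un_cv_eventually (fun _ => 1) _ _ 2%nat). intros n Hn. destruct n as [|[|n]]; try lia.
  rewrite sumn_front, sumn_front. rewrite (sumn_ext (fun i => X (S (S i))) (fun _ => 0)) by (intros; reflexivity). rewrite sumn_zero; simpl; ring.
  apply Un_cv_const. Qed.

Lemma HasSum_shiftL u a : HasSum u a -> HasSum (shiftL u) (a - u 0%nat).
Proof. intros H. apply Un_cv_S in H. eapply Un_cv_ext; [|apply CV_minus; [exact H|apply Un_cv_const]].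
  intros n; cbv beta. rewrite sumn_front. unfold shiftL. ring. Qed.

Lemma HasSum_unique u a b : HasSum u a -> HasSum u b -> a = b.
Proof. apply UL_sequence. Qed.

Lemma sumn_growing u : (forall i, 0 <= u i) -> Un_growing (fun n => sumn u n).
Proof. intros H n. simpl. specialize (H n); lra. Qed.

Lemma nonneg_HasSum u M : (forall i, 0 <= u i) -> (forall n, sumn u n <= M) -> exists l, HasSum u l.
Proof. intros H HM. destruct (growing_cv (fun n => sumn u n)) as [l Hl].
  apply sumn_growing; auto. exists M. intros x [i ->]. apply HM. exists l; exact Hl. Qed.

Definition pos (u : ser) : ser := fun n => (Rabs (u n) + u n) / 2.
Definition neg (u : ser) : ser := fun n => (Rabs (u n) - u n) / 2.

Lemma pos_nonneg u i : 0 <= pos u i.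
Proof. unfold pos. pose proof (Rle_abs (u i)); pose proof (Rabs_pos (u i)). pose proof (Rle_abs (- u i)). rewrite Rabs_Ropp in H1. lra. Qed.
Lemma neg_nonneg u i : 0 <= neg u i.
Proof. unfold neg. pose proof (Rle_abs (u i)). lra. Qed.
Lemma pos_neg u : u = (pos u - neg u)%S.
Proof. extensionality n. cbv [ssub sadd sopp pos neg]. field. Qed.
Lemma pos_le u n : sumn (pos u) n <= sumn (fun i => Rabs (u i)) n.
Proof. apply sumn_le. intros i _. unfold pos. pose proof (Rle_abs (u i)). lra. Qed.
Lemma neg_le u n : sumn (neg u) n <= sumn (fun i => Rabs (u i)) n.
Proof. apply sumn_le. intros i _. unfold neg. pose proof (Rle_abs (- u i)). rewrite Rabs_Ropp in H. lra. Qed.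

Lemma L1_HasSum u : L1 u -> exists l, HasSum u l.
Proof. intros [M HM].
  destruct (nonneg_HasSum (pos u) M) as [p Hp]. apply pos_nonneg. intros n; eapply Rle_trans; [apply pos_le|apply HM].
  destruct (nonneg_HasSum (neg u) M) as [q Hq]. apply neg_nonneg. intros n; eapply Rle_trans; [apply neg_le|apply HM].
  exists (p - q). rewrite (pos_neg u). apply HasSum_sub; auto. Qed.

Lemma sumn_conv u v N : sumn (conv u v) N = sumn (fun i => u i * sumn v (N - i)%nat) N.
Proof. destruct N as [|n]. reflexivity.
  unfold conv. rewrite (tri (fun i j => u i * v j)). apply sumn_ext; intros i Hi.
  rewrite <- sumn_scal. replace (S n - i)%nat with (S (n - i)) by lia. reflexivity. Qed.

Lemma Mertens_nonneg u v U V : (forall i, 0 <= u i) -> (forall i, 0 <= v i) ->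
  HasSum u U -> HasSum v V -> HasSum (conv u v) (U * V).
Proof.
  intros Hu Hv HU HV.
  assert (gU := growing_ineq _ _ (sumn_growing u Hu) HU).
  assert (gV := growing_ineq _ _ (sumn_growing v Hv) HV).
  assert (Up : forall n, 0 <= sumn u n) by (intros; apply sumn_nonneg; auto).
  assert (Vp : forall n, 0 <= sumn v n) by (intros; apply sumn_nonneg; auto).
  assert (Upper : forall N, sumn (conv u v) N <= U * V).
  { intros N. rewrite sumn_conv. apply Rle_trans with (sumn (fun i => u i * V) N).
    apply sumn_le; intros i _. apply Rmult_le_compat_l; auto.
    rewrite (sumn_ext _ (fun i => V * u i)) by (intros; ring). rewrite sumn_scal.
    specialize (gU N). specialize (Vp 0%nat). assert (0 <= V) by (specialize (gV 0%nat); simpl in gV; lra). nra. }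
  assert (Lower : forall N j, (j <= N)%nat -> sumn u j * sumn v (N - j)%nat <= sumn (conv u v) N).
  { intros N j Hj. rewrite sumn_conv.
    apply Rle_trans with (sumn (fun i => u i * sumn v (N - i)%nat) j).
    - rewrite Rmult_comm, <- sumn_scal. apply sumn_le; intros i Hi. rewrite Rmult_comm.
      apply Rmult_le_compat_l; auto. apply sumn_mono; auto; lia.
    - apply sumn_mono; auto. intros i. apply Rmult_le_pos; auto. }
  assert (HP := CV_mult _ _ _ _ HU HV).
  intros eps He. destruct (HP eps He) as [J HJ].
  exists (2 * J)%nat. intros n Hn. unfold Rdist.
  specialize (HJ J (le_n J)). unfold Rdist in HJ. apply Rabs_def2 in HJ.
  specialize (Upper n). specialize (Lower n J ltac:(lia)).
  assert (sumn u J * sumn v J <= sumn u J * sumn v (n - J)%nat).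
  { apply Rmult_le_compat_l; auto. apply sumn_mono; auto; lia. }
  apply Rabs_def1; lra.
Qed.

Lemma L1_pos u : L1 u -> L1 (pos u).
Proof. intros [M HM]; exists M; intros n. eapply Rle_trans; [|apply HM].
  apply sumn_le; intros i _. rewrite Rabs_pos_eq by apply pos_nonneg. unfold pos.
  pose proof (Rle_abs (u i)). lra. Qed.
Lemma L1_neg u : L1 u -> L1 (neg u).
Proof. intros [M HM]; exists M; intros n. eapply Rle_trans; [|apply HM].
  apply sumn_le; intros i _. rewrite Rabs_pos_eq by apply neg_nonneg. unfold neg.
  pose proof (Rle_abs (- u i)). rewrite Rabs_Ropp in H. lra. Qed.

Lemma Mertens u v U V : L1 u -> L1 v -> HasSum u U -> HasSum v V -> HasSum (conv u v) (U * V).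
Proof.
  intros Lu Lv HU HV.
  destruct (L1_HasSum _ (L1_pos _ Lu)) as [up Hup]. destruct (L1_HasSum _ (L1_neg _ Lu)) as [um Hum].
  destruct (L1_HasSum _ (L1_pos _ Lv)) as [vp Hvp]. destruct (L1_HasSum _ (L1_neg _ Lv)) as [vm Hvm].
  assert (EU : U = up - um). { apply (HasSum_unique u); auto. rewrite (pos_neg u) at 1. apply HasSum_sub; auto. }
  assert (EV : V = vp - vm). { apply (HasSum_unique v); auto. rewrite (pos_neg v) at 1. apply HasSum_sub; auto. }
  rewrite (pos_neg u), (pos_neg v).
  replace (conv (pos u - neg u) (pos v - neg v))%S with
    ((conv (pos u) (pos v) + conv (neg u) (neg v)) - (conv (pos u) (neg v) + conv (neg u) (pos v)))%S by ring.
  replace (U * V) with ((up * vp + um * vm) - (up * vm + um * vp)) by (subst; ring).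
  apply HasSum_sub; apply HasSum_plus; apply Mertens_nonneg; auto using pos_nonneg, neg_nonneg.
Qed.

Lemma L1_plus u v : L1 u -> L1 v -> L1 (u + v)%S.
Proof. intros [M HM] [N HN]; exists (M + N); intros n.
  eapply Rle_trans; [|apply Rplus_le_compat; [apply HM|apply HN]]. rewrite <- sumn_plus.
  apply sumn_le; intros; apply Rabs_triang. Qed.
Lemma L1_scal c u : L1 u -> L1 (cst c * u)%S.
Proof. intros [M HM]; exists (Rabs c * M); intros n.
  rewrite (sumn_ext _ (fun i => Rabs c * Rabs (u i))). rewrite sumn_scal. apply Rmult_le_compat_l; auto. apply Rabs_pos.
  intros; rewrite conv_cst_l, Rabs_mult; reflexivity. Qed.
Lemma L1_opp u : L1 u -> L1 (- u)%S.
Proof. intros [M HM]; exists M; intros n. rewrite (sumn_ext _ (fun i => Rabs (u i))); auto.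
  intros; unfold sopp; apply Rabs_Ropp. Qed.
Lemma L1_sub u v : L1 u -> L1 v -> L1 (u - v)%S.
Proof. intros; apply L1_plus; auto; apply L1_opp; auto. Qed.
Lemma L1_cst c : L1 (cst c).
Proof. exists (Rabs c); intros n. destruct n. simpl; apply Rabs_pos. rewrite sumn_front.
  rewrite (sumn_ext _ (fun _ => 0)). rewrite sumn_zero. simpl; lra. intros; simpl; apply Rabs_R0. Qed.
Lemma L1_X : L1 X.
Proof. exists 1; intros n. destruct n as [|[|n]]. simpl; lra. simpl. rewrite ?Rabs_R0, ?Rabs_R1; lra.
  rewrite sumn_front, sumn_front. rewrite (sumn_ext (fun i => Rabs (X (S (S i)))) (fun _ => 0)). rewrite sumn_zero. simpl.
  rewrite ?Rabs_R0, ?Rabs_R1; lra. intros; simpl; apply Rabs_R0. Qed.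
Lemma L1_shiftL u : L1 u -> L1 (shiftL u).
Proof. intros [M HM]; exists M; intros n. eapply Rle_trans; [|apply (HM (S n))].
  rewrite sumn_front. unfold shiftL. pose proof (Rabs_pos (u 0%nat)). lra. Qed.
Lemma L1_conv u v : L1 u -> L1 v -> L1 (conv u v).
Proof. intros [M HM] [N HN]; exists (M * N); intros n.
  apply Rle_trans with (sumn (conv (fun i => Rabs (u i)) (fun i => Rabs (v i))) n).
  { apply sumn_le; intros i _. unfold conv. eapply Rle_trans; [apply sumn_abs|].
    apply sumn_le; intros; rewrite Rabs_mult; lra. }
  rewrite sumn_conv. apply Rle_trans with (sumn (fun i => Rabs (u i) * N) n).
  apply sumn_le; intros i _. apply Rmult_le_compat_l. apply Rabs_pos. apply HN.
  rewrite (sumn_ext _ (fun i => N * Rabs (u i))) by (intros; ring). rewrite sumn_scal.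
  assert (0 <= N) by (specialize (HN 0%nat); simpl in HN; lra).
  specialize (HM n). nra. Qed.
Lemma L1_s1 : L1 s1. Proof. apply L1_cst. Qed.

Fixpoint spow (u : ser) (n : nat) : ser := match n with O => s1 | S n' => conv (spow u n') u end.
Lemma L1_spow u n : L1 u -> L1 (spow u n).
Proof. intros H; induction n; simpl. apply L1_cst. apply L1_conv; auto. Qed.
Lemma HasSum_spow u U n : L1 u -> HasSum u U -> HasSum (spow u n) (U ^ n).
Proof. intros L H; induction n; simpl. apply HasSum_cst. replace (U * U ^ n) with (U ^ n * U) by ring. apply Mertens; auto. apply L1_spow; auto. Qed.


Lemma sumn_minus f g n : sumn (fun i => f i - g i) n = sumn f n - sumn g n.
Proof. induction n; simpl; [ring|rewrite IHn; ring]. Qed.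

Fixpoint pp (n : nat) : R := match n with O => 1 | S m => pp m * (2 * INR m + 1) / (2 * INR m + 2) end.
Definition Eop (u : ser) : ser := fun n => INR n * u n.

Lemma Eop_conv u v : Eop (u * v)%S = (Eop u * v + u * Eop v)%S.
Proof. extensionality n. unfold Eop, sadd, conv. rewrite <- sumn_plus, <- sumn_scal.
  apply sumn_ext; intros i Hi. rewrite minus_INR by lia. ring. Qed.

Lemma pp_pos n : 0 < pp n.
Proof. induction n; simpl. lra. pose proof (pos_INR n). apply Rmult_lt_0_compat. apply Rmult_lt_0_compat; lra. apply Rinv_0_lt_compat; lra. Qed.

Lemma pp_dec n : pp (S n) <= pp n.
Proof. simpl. pose proof (pos_INR n). pose proof (pp_pos n).
  unfold Rdiv. rewrite Rmult_assoc. rewrite <- (Rmult_1_r (pp n)) at 2. apply Rmult_le_compat_l; [lra|].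
  apply Rmult_le_reg_r with (2 * INR n + 2); [lra|]. rewrite Rmult_assoc, Rinv_l by lra. lra. Qed.

Lemma Eop_pp : Eop pp = (X * (Eop pp + cst (1/2) * pp))%S.
Proof. extensionality n. rewrite conv_X_l. unfold Eop. destruct n as [|m]. simpl; ring.
  unfold sadd. rewrite conv_cst_l. simpl pp. rewrite S_INR. pose proof (pos_INR m). field. lra. Qed.

Lemma coef_1mX u n : ((s1 - X) * u)%S (S n) = u (S n) - u n.
Proof. replace ((s1 - X) * u)%S with (u - X * u)%S by ring. unfold ssub, sadd, sopp. rewrite conv_X_l. ring. Qed.

Lemma PP_ones : (pp * pp)%S = ones.
Proof.
  set (y := Eop pp).
  assert (H1 : ((s1 - X) * y = X * cst (1/2) * pp)%S).
  { transitivity (y - X * y)%S. ring. unfold y at 1. rewrite Eop_pp. fold y. ring. }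
  assert (H2 : ((s1 - X) * Eop (pp * pp) = X * (pp * pp))%S).
  { rewrite Eop_conv. fold y. transitivity ((s1 + s1) * pp * ((s1 - X) * y))%S. ring. rewrite H1.
    transitivity ((cst (1/2) + cst (1/2)) * X * (pp * pp))%S. ring. rewrite <- cst_add.
    replace (1/2 + 1/2) with 1 by field. fold s1. ring. }
  extensionality n. unfold ones. induction n.
  - unfold conv. simpl. ring.
  - assert (E := f_equal (fun f => f (S n)) H2). cbv beta in E. rewrite coef_1mX, conv_X_l in E.
    unfold Eop in E. rewrite S_INR in E. rewrite IHn in E. pose proof (pos_INR n).
    apply Rmult_eq_reg_l with (INR n + 1); [|lra]. rewrite Rmult_1_r. lra.
Qed.

Definition ss : ser := ((s1 - X) * pp)%S.

Lemma ss_sq : (ss * ss = s1 - X)%S.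
Proof. unfold ss. transitivity ((s1 - X) * ((s1 - X) * (pp * pp)))%S. ring. rewrite PP_ones, ones_X. ring. Qed.

Lemma ss_0 : ss 0%nat = 1.
Proof. unfold ss. replace ((s1 - X) * pp)%S with (pp - X * pp)%S by ring. unfold ssub, sadd, sopp. rewrite conv_X_l. simpl; ring. Qed.
Lemma ss_S n : ss (S n) = pp (S n) - pp n.
Proof. unfold ss. rewrite coef_1mX. reflexivity. Qed.

Lemma ss_abs_sum n : sumn (fun i => Rabs (ss i)) (S n) = 2 - pp n.
Proof. induction n. simpl. rewrite ss_0, Rabs_R1. ring.
  rewrite sumn_S, IHn, ss_S. rewrite Rabs_left1. ring. pose proof (pp_dec n); lra. Qed.

Lemma L1_ss : L1 ss.
Proof. exists 2. intros [|n]. simpl; lra. rewrite ss_abs_sum. pose proof (pp_pos n); lra. Qed.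

Fixpoint ef (c d : R) (n : nat) : R * R :=
  match n with O => (1, 0) | S m => let (x, y) := ef c d m in (x * c - y * d, x * d + y * c) end.
Definition ee c d n := fst (ef c d n).
Definition ff c d n := snd (ef c d n).

Lemma ee_S c d n : ee c d (S n) = ee c d n * c - ff c d n * d.
Proof. unfold ee, ff. simpl. destruct (ef c d n); reflexivity. Qed.
Lemma ff_S c d n : ff c d (S n) = ee c d n * d + ff c d n * c.
Proof. unfold ee, ff. simpl. destruct (ef c d n); reflexivity. Qed.

Lemma ef_add c d i j : ee c d (i + j) = ee c d i * ee c d j - ff c d i * ff c d j /\
                       ff c d (i + j) = ee c d i * ff c d j + ff c d i * ee c d j.
Proof. induction i; simpl. unfold ee, ff; simpl; split; ring.
  rewrite !ee_S, !ff_S. destruct IHi as [H1 H2]. rewrite H1, H2. split; ring. Qed.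

Lemma ef_norm c d n : c * c + d * d = 1 -> ee c d n * ee c d n + ff c d n * ff c d n = 1.
Proof. intros H; induction n. unfold ee, ff; simpl; ring.
  rewrite ee_S, ff_S. transitivity ((ee c d n * ee c d n + ff c d n * ff c d n) * (c * c + d * d)). ring.
  rewrite IHn, H; ring. Qed.

Lemma ee_bound c d n : c * c + d * d = 1 -> Rabs (ee c d n) <= 1.
Proof. intros H. pose proof (ef_norm c d n H). apply Rabs_le. nra. Qed.
Lemma ff_bound c d n : c * c + d * d = 1 -> Rabs (ff c d n) <= 1.
Proof. intros H. pose proof (ef_norm c d n H). apply Rabs_le. nra. Qed.

Definition Ar c d : ser := fun n => ss n * ee c d n.
Definition Ai c d : ser := fun n => ss n * ff c d n.
Definition DD c d : ser := (Ar c d * Ar c d + Ai c d * Ai c d)%S.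

Lemma L1_mul_bounded u w : L1 u -> (forall n, Rabs (w n) <= 1) -> L1 (fun n => u n * w n).
Proof. intros [M HM] Hw; exists M; intros n. eapply Rle_trans; [|apply HM]. apply sumn_le; intros i _.
  rewrite Rabs_mult. specialize (Hw i). pose proof (Rabs_pos (u i)). nra. Qed.

Lemma AA_re c d : (Ar c d * Ar c d - Ai c d * Ai c d)%S = fun n => ee c d n * (ss * ss)%S n.
Proof. extensionality n. unfold ssub, sadd, sopp. unfold conv. rewrite <- sumn_scal.
  replace (- sumn (fun i => Ai c d i * Ai c d (n - i)%nat) (S n)) with (-1 * sumn (fun i => Ai c d i * Ai c d (n - i)%nat) (S n)) by ring.
  rewrite <- sumn_scal, <- sumn_plus. apply sumn_ext; intros i Hi.
  unfold Ar, Ai. destruct (ef_add c d i (n - i)) as [H1 _]. replace (i + (n - i))%nat with n in H1 by lia.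
  rewrite H1. ring. Qed.

Lemma AA_im c d : (Ar c d * Ai c d + Ai c d * Ar c d)%S = fun n => ff c d n * (ss * ss)%S n.
Proof. extensionality n. unfold sadd. unfold conv. rewrite <- sumn_scal, <- sumn_plus. apply sumn_ext; intros i Hi.
  unfold Ar, Ai. destruct (ef_add c d i (n - i)) as [_ H2]. replace (i + (n - i))%nat with n in H2 by lia.
  rewrite H2. ring. Qed.

Lemma AA_re' c d : (Ar c d * Ar c d - Ai c d * Ai c d)%S = (s1 - cst c * X)%S.
Proof. rewrite AA_re, ss_sq. extensionality n. unfold ssub, sadd, sopp. rewrite conv_cst_l.
  destruct n as [|[|n]]; unfold s1, cst, X; simpl. unfold ee; simpl; ring. rewrite ee_S. unfold ee, ff; simpl; ring. ring. Qed.

Lemma AA_im' c d : (Ar c d * Ai c d + Ai c d * Ar c d)%S = (- (cst d * X))%S.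
Proof. rewrite AA_im, ss_sq. extensionality n. unfold ssub, sadd, sopp. rewrite conv_cst_l.
  destruct n as [|[|n]]; unfold s1, cst, X; simpl. unfold ff; simpl; ring. rewrite ff_S. unfold ee, ff; simpl; ring. ring. Qed.

Lemma DD_sq c d : c * c + d * d = 1 -> (DD c d * DD c d = s1 - cst (2 * c) * X + X * X)%S.
Proof. intros H. unfold DD.
  set (x := Ar c d). set (y := Ai c d).
  transitivity ((x * x - y * y) * (x * x - y * y) + (x * y + y * x) * (x * y + y * x))%S. ring.
  unfold x, y. rewrite AA_re', AA_im'.
  transitivity (s1 - cst 2 * cst c * X + (cst c * cst c + cst d * cst d) * X * X)%S.
  replace (cst 2) with (s1 + s1)%S by (unfold s1; rewrite <- cst_add; f_equal; ring). ring.
  rewrite <- !cst_mul, <- cst_add, H. fold s1. ring.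
Qed.

Lemma L1_DD c d : c * c + d * d = 1 -> L1 (DD c d).
Proof. intros H. unfold DD. assert (L1 (Ar c d)) by (apply L1_mul_bounded; [apply L1_ss|intros; apply ee_bound; auto]).
  assert (L1 (Ai c d)) by (apply L1_mul_bounded; [apply L1_ss|intros; apply ff_bound; auto]).
  apply L1_plus; apply L1_conv; auto. Qed.

Lemma DD_0 c d : DD c d 0%nat = 1.
Proof. unfold DD, sadd, conv, Ar, Ai. simpl. rewrite ss_0. unfold ee, ff; simpl. ring. Qed.

Lemma HasSum_DD a b : a * a + b * b = 1 -> 0 < b ->
  HasSum (DD (a * a - b * b) (2 * a * b)) (2 * b).
Proof. intros Hab Hb. set (c := a * a - b * b). set (d := 2 * a * b).
  assert (Hcd : c * c + d * d = 1). { unfold c, d. transitivity ((a * a + b * b) * (a * a + b * b)). ring. rewrite Hab; ring. }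
  assert (L1 (Ar c d)) by (apply L1_mul_bounded; [apply L1_ss|intros; apply ee_bound; auto]).
  assert (L1 (Ai c d)) by (apply L1_mul_bounded; [apply L1_ss|intros; apply ff_bound; auto]).
  destruct (L1_HasSum _ H) as [al Hal]. destruct (L1_HasSum _ H0) as [be Hbe].
  assert (HD : HasSum (DD c d) (al * al + be * be)) by (apply HasSum_plus; apply Mertens; auto).
  assert (HD2 : HasSum (DD c d * DD c d)%S ((al * al + be * be) * (al * al + be * be))) by (apply Mertens; auto; apply L1_DD; auto).
  rewrite DD_sq in HD2 by auto.
  assert (HQ : HasSum (s1 - cst (2 * c) * X + X * X)%S (1 - 2 * c * 1 + 1 * 1)).
  { apply HasSum_plus. apply HasSum_sub. apply HasSum_cst. apply HasSum_scal, HasSum_X. apply Mertens; auto using L1_X, HasSum_X. }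
  pose proof (HasSum_unique _ _ _ HD2 HQ) as E.
  replace (2 * b) with (al * al + be * be); auto.
  assert (0 <= al * al + be * be) by nra. unfold c in E. nra.
Qed.


Lemma lc (L R Z : ser) : (L - R = Z)%S -> Z = s0 -> L = R.
Proof. intros H1 H2. rewrite H2 in H1. transitivity (L - R + R)%S. ring. rewrite H1. ring. Qed.
Lemma sub0 (L R : ser) : L = R -> (L - R = s0)%S.
Proof. intros ->; ring. Qed.
Lemma cancel (C IC u v : ser) : (IC * C = s1)%S -> (C * u = C * v)%S -> u = v.
Proof. intros H1 H2. transitivity (IC * C * u)%S. rewrite H1; ring. rewrite <- conv_assoc, H2, conv_assoc, H1; ring. Qed.
Lemma cst_inv (c : R) : c <> 0 -> (cst (/ c) * cst c = s1)%S.
Proof. intros H. rewrite <- cst_mul, Rinv_l by auto. reflexivity. Qed.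
Lemma shiftL_X u : shiftL (X * u)%S = u.
Proof. extensionality n. unfold shiftL. rewrite conv_X_l. reflexivity. Qed.
Lemma X_0 u : (X * u)%S 0%nat = 0.
Proof. rewrite conv_X_l. reflexivity. Qed.
Lemma shiftL_plus u v : shiftL (u + v)%S = (shiftL u + shiftL v)%S.
Proof. reflexivity. Qed.
Lemma shiftL_s1 : shiftL s1 = s0.
Proof. extensionality n. destruct n; reflexivity. Qed.

Definition Dd a b := DD (a * a - b * b) (2 * a * b).
Definition mm a b : ser := (cst (/ (2 * a)) * shiftL (s1 + X - Dd a b))%S.
Definition hh a b : ser := (cst (/ b) * (mm a b - cst a))%S.
Definition NN a b ep : ser := (cst (/ (2 * (b - ep))) * ((cst b + cst b) - cst ep * (s1 - X) - cst ep * Dd a b))%S.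
Definition l0 a b ep : ser := (ones * NN a b ep)%S.
Definition rr a b ep (x : nat) : ser := match x with O => s0 | S x' => (cst ep * l0 a b ep * spow (mm a b) x')%S end.
Definition ll a b ep (x : nat) : ser := match x with O => l0 a b ep | S x' => (rr a b ep (S x') * hh a b)%S end.


Lemma Dd_sq a b : a * a + b * b = 1 ->
  (Dd a b * Dd a b = s1 - (s1 + s1) * (cst a * cst a - cst b * cst b) * X + X * X)%S.
Proof. intros H. unfold Dd. rewrite DD_sq.
  rewrite cst_mul, cst_sub, !cst_mul. replace (cst 2) with (s1 + s1)%S by (unfold s1; rewrite <- cst_add; f_equal; ring). reflexivity.
  transitivity ((a * a + b * b) * (a * a + b * b)). ring. rewrite H; ring. Qed.

Lemma XM a b : (X * mm a b = cst (/ (2 * a)) * (s1 + X - Dd a b))%S.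
Proof. unfold mm. transitivity (cst (/ (2 * a)) * (X * shiftL (s1 + X - Dd a b)))%S. ring.
  rewrite X_shiftL. f_equal. replace ((s1 + X - Dd a b)%S 0%nat) with 0.
  fold s0; ring. unfold ssub, sadd, sopp. unfold Dd; rewrite DD_0. simpl. ring. Qed.

Lemma KM a b : 0 < a -> ((cst a + cst a) * (X * mm a b) = s1 + X - Dd a b)%S.
Proof. intros Ha. rewrite XM. rewrite conv_assoc, <- cst_add, <- cst_mul.
  replace ((a + a) * / (2 * a)) with 1 by (field; lra). fold s1; ring. Qed.

Lemma Qd a b : 0 < a -> a * a + b * b = 1 ->
  (cst a * X * mm a b * mm a b + cst a = (s1 + X) * mm a b)%S.
Proof. intros Ha Hab.
  set (A := cst a). set (B := cst b). set (m := mm a b). set (D := Dd a b).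
  assert (HK := KM a b Ha). fold A m D in HK.
  assert (HD := Dd_sq a b Hab). fold A B D in HD.
  assert (HAB : (A * A + B * B = s1)%S). { unfold A, B. rewrite <- !cst_mul, <- cst_add, Hab. reflexivity. }
  assert (HI : (cst (/ (2 * a)) * (A + A) = s1)%S). { unfold A. rewrite <- cst_add, <- cst_mul. replace (/ (2 * a) * (a + a)) with 1 by (field; lra). reflexivity. }
  apply X_cancel.
  apply (cancel (A + A)%S (cst (/ (2 * a)))); auto.
  apply (cancel (A + A)%S (cst (/ (2 * a)))); auto.
  set (M := (X * m)%S). set (T := (s1 + X - D)%S). set (q := (s1 - (s1 + s1) * (A * A - B * B) * X + X * X)%S).
  apply (lc _ _ (A * ((A + A) * M - T) * ((A + A) * M + T) - (s1 + X) * (A + A) * ((A + A) * M - T)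
     + A * (D * D - q) + (s1 + s1) * A * X * (A * A + B * B - s1))%S).
  - unfold M, T, q. ring.
  - unfold M, T, q. rewrite (sub0 _ _ HK), (sub0 _ _ HD), (sub0 _ _ HAB). ring.
Qed.

Lemma Bh a b : 0 < b -> (cst b * hh a b = mm a b - cst a)%S.
Proof. intros Hb. unfold hh. rewrite conv_assoc, <- cst_mul, Rinv_r by lra. fold s1; ring. Qed.

Lemma E2' a b : 0 < a -> 0 < b -> a * a + b * b = 1 ->
  hh a b = (X * (mm a b * (cst a * hh a b - cst b)))%S.
Proof. intros Ha Hb Hab.
  assert (HB := Bh a b Hb). assert (HQ := Qd a b Ha Hab).
  set (A := cst a) in *. set (B := cst b) in *. set (m := mm a b) in *. set (h := hh a b) in *.
  assert (HAB : (A * A + B * B = s1)%S). { unfold A, B. rewrite <- !cst_mul, <- cst_add, Hab. reflexivity. }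
  apply (cancel B (cst (/ b))). apply cst_inv; lra.
  apply (lc _ _ ((B * h - (m - A)) * (s1 - X * m * A) + X * m * (B * B + A * A - s1) - (A * X * m * m + A - (s1 + X) * m))%S).
  - ring.
  - rewrite (sub0 _ _ HB), (sub0 _ _ HQ). rewrite (sub0 _ _ (eq_trans (ltac:(ring) : (B * B + A * A = A * A + B * B)%S) HAB)). ring.
Qed.

Lemma G a b : 0 < a -> 0 < b -> a * a + b * b = 1 ->
  ((s1 + s1) * cst b * X * (cst a * hh a b - cst b) = s1 - X - Dd a b)%S.
Proof. intros Ha Hb Hab.
  assert (HB := Bh a b Hb). assert (HK := KM a b Ha).
  set (A := cst a) in *. set (B := cst b) in *. set (m := mm a b) in *. set (h := hh a b) in *. set (D := Dd a b) in *.
  assert (HAB : (A * A + B * B = s1)%S). { unfold A, B. rewrite <- !cst_mul, <- cst_add, Hab. reflexivity. }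
  apply (lc _ _ ((s1 + s1) * X * A * (B * h - (m - A)) - (s1 + s1) * X * (A * A + B * B - s1) + ((A + A) * (X * m) - (s1 + X - D)))%S).
  - ring.
  - rewrite (sub0 _ _ HB), (sub0 _ _ HK), (sub0 _ _ HAB). ring.
Qed.

Lemma Nid a b ep : a * a + b * b = 1 -> ep * ep = 1 -> b - ep <> 0 ->
  (NN a b ep * ((cst b + cst b) - cst ep * (s1 - X - Dd a b)) = (cst b + cst b) * (s1 - X))%S.
Proof. intros Hab He Hbe.
  assert (HD := Dd_sq a b Hab).
  assert (HI : (cst (/ (2 * (b - ep))) * (cst b + cst b - cst ep - cst ep) = s1)%S).
  { rewrite <- !cst_add, <- !cst_sub, <- cst_mul. replace (/ (2 * (b - ep)) * (b + b - ep - ep)) with 1 by (field; auto). reflexivity. }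
  unfold NN. set (A := cst a) in *. set (B := cst b) in *. set (E := cst ep) in *. set (D := Dd a b) in *.
  set (I := cst (/ (2 * (b - ep)))) in *.
  assert (HAB : (A * A + B * B = s1)%S). { unfold A, B. rewrite <- !cst_mul, <- cst_add, Hab. reflexivity. }
  assert (HE : (E * E = s1)%S). { unfold E. rewrite <- !cst_mul, He. reflexivity. }
  apply (cancel (B + B - E - E)%S I); auto.
  set (q := (s1 - (s1 + s1) * (A * A - B * B) * X + X * X)%S) in *.
  apply (lc _ _ ((I * (B + B - E - E) - s1) * ((B + B) - E * (s1 - X) - E * D) * ((B + B) - E * (s1 - X - D))
     - E * E * (D * D - q) + (E * E - s1) * ((s1 - X) * (s1 - X) - q) + (s1 + s1) * X * (A * A + B * B - s1)
     )%S).
  - unfold q. ring.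
  - rewrite (sub0 _ _ HI), (sub0 _ _ HD), (sub0 _ _ HE), (sub0 _ _ HAB). ring.
Qed.

Lemma Fid a b ep : 0 < a -> 0 < b -> a * a + b * b = 1 -> ep * ep = 1 -> b - ep <> 0 ->
  l0 a b ep = (s1 + X * (cst ep * l0 a b ep * (cst a * hh a b - cst b)))%S.
Proof. intros Ha Hb Hab He Hbe.
  assert (HG := G a b Ha Hb Hab). assert (HN := Nid a b ep Hab He Hbe). assert (HO := ones_X).
  assert (HI : ((cst (/ 2) * cst (/ b)) * ((s1 + s1) * cst b) = s1)%S).
  { unfold s1. rewrite <- cst_add, <- !cst_mul. replace (/ 2 * / b * ((1 + 1) * b)) with 1 by (field; lra). reflexivity. }
  apply (cancel _ _ _ _ HI).
  unfold l0 in *.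
  set (A := cst a) in *. set (B := cst b) in *. set (E := cst ep) in *. set (D := Dd a b) in *.
  set (h := hh a b) in *. set (N := NN a b ep) in *.
  apply (lc _ _ (- E * (ones * N) * ((s1 + s1) * B * X * (A * h - B) - (s1 - X - D))
     + ones * (N * ((B + B) - E * (s1 - X - D)) - (B + B) * (s1 - X)) + (B + B) * ((s1 - X) * ones - s1))%S).
  - ring.
  - rewrite (sub0 _ _ HG), (sub0 _ _ HN), (sub0 _ _ HO). ring.
Qed.

Lemma l0_0 a b ep : 0 < a -> 0 < b -> a * a + b * b = 1 -> ep * ep = 1 -> b - ep <> 0 -> l0 a b ep 0%nat = 1.
Proof. intros. rewrite Fid by auto. unfold sadd. rewrite X_0. unfold s1, cst. ring. Qed.

Lemma rec_L0 a b ep : 0 < a -> 0 < b -> a * a + b * b = 1 -> ep * ep = 1 -> b - ep <> 0 ->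
  forall n, ll a b ep 0 (S n) = a * ll a b ep 1 n - b * rr a b ep 1 n.
Proof. intros Ha Hb Hab He Hbe n. simpl ll. simpl rr.
  assert (E := f_equal (fun f => shiftL f n) (Fid a b ep Ha Hb Hab He Hbe)). cbv beta in E.
  rewrite shiftL_plus, shiftL_s1, shiftL_X in E. unfold shiftL at 1 in E. rewrite E.
  replace (s0 + cst ep * l0 a b ep * (cst a * hh a b - cst b))%S with
    (cst a * (cst ep * l0 a b ep * s1 * hh a b) - cst b * (cst ep * l0 a b ep * s1))%S by ring.
  unfold ssub, sadd, sopp. rewrite !conv_cst_l. ring. Qed.

Lemma rec_LS a b ep : 0 < a -> 0 < b -> a * a + b * b = 1 ->
  forall x n, ll a b ep (S x) (S n) = a * ll a b ep (S (S x)) n - b * rr a b ep (S (S x)) n.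
Proof. intros Ha Hb Hab x n.
  set (R := (cst ep * l0 a b ep * spow (mm a b) x)%S).
  assert (H0 : ll a b ep (S x) = (R * hh a b)%S) by reflexivity.
  assert (H1 : rr a b ep (S (S x)) = (R * mm a b)%S) by (simpl; unfold R; ring).
  assert (H2 : ll a b ep (S (S x)) = (R * mm a b * hh a b)%S) by (unfold ll; rewrite H1; reflexivity).
  rewrite H0, H1, H2.
  assert (E : (R * hh a b)%S = (X * (cst a * (R * mm a b * hh a b) - cst b * (R * mm a b)))%S).
  { rewrite (E2' a b Ha Hb Hab) at 1. ring. }
  rewrite E. rewrite conv_X_l. unfold ssub, sadd, sopp. rewrite !conv_cst_l. ring. Qed.

Lemma rec_L_0 a b ep : 0 < a -> 0 < b -> a * a + b * b = 1 -> forall x, ll a b ep (S x) 0%nat = 0.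
Proof. intros Ha Hb Hab x. change (ll a b ep (S x)) with (rr a b ep (S x) * hh a b)%S.
  generalize (rr a b ep (S x)); intros R. rewrite (E2' a b Ha Hb Hab).
  replace (R * (X * (mm a b * (cst a * hh a b - cst b))))%S with
    (X * (R * (mm a b * (cst a * hh a b - cst b))))%S by ring. apply X_0. Qed.

Lemma rec_R1 a b ep n : rr a b ep 1 n = ep * ll a b ep 0 n.
Proof. simpl. replace (cst ep * l0 a b ep * s1)%S with (cst ep * l0 a b ep)%S by ring. apply conv_cst_l. Qed.

Lemma rec_RS a b ep : 0 < b -> forall y n, rr a b ep (S (S y)) n = b * ll a b ep (S y) n + a * rr a b ep (S y) n.
Proof. intros Hb y n.
  assert (H1 : rr a b ep (S (S y)) = (rr a b ep (S y) * mm a b)%S) by (simpl; ring).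
  rewrite H1. change (ll a b ep (S y)) with (rr a b ep (S y) * hh a b)%S.
  generalize (rr a b ep (S y)); intros Rs.
  rewrite <- !conv_cst_l. change (conv (cst b) (Rs * hh a b)%S n + conv (cst a) Rs n) with ((cst b * (Rs * hh a b) + cst a * Rs)%S n).
  assert (E : (Rs * mm a b = cst b * (Rs * hh a b) + cst a * Rs)%S). { transitivity (Rs * (cst b * hh a b) + cst a * Rs)%S. rewrite Bh by auto. ring. ring. } rewrite E. reflexivity. Qed.


Definition amp (F : nat -> ser) (t x : nat) : R :=
  if Nat.leb x t then (if Nat.even (t - x) then F x (Nat.div2 (t - x)) else 0) else 0.

Lemma amp_in F t x d : t = (x + d)%nat -> amp F t x = if Nat.even d then F x (Nat.div2 d) else 0.
Proof. intros ->. unfold amp. rewrite (proj2 (Nat.leb_le x (x + d))) by lia.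
  replace (x + d - x)%nat with d by lia. reflexivity. Qed.
Lemma amp_out F t x : (t < x)%nat -> amp F t x = 0.
Proof. intros H. unfold amp. rewrite (proj2 (Nat.leb_gt x t)) by lia. reflexivity. Qed.

Lemma amp_diag F t : amp F t t = F t 0%nat.
Proof. rewrite (amp_in _ t t 0) by lia. reflexivity. Qed.

Lemma rec_L a b ep : 0 < a -> 0 < b -> a * a + b * b = 1 -> ep * ep = 1 -> b - ep <> 0 ->
  forall x n, ll a b ep x (S n) = a * ll a b ep (S x) n - b * rr a b ep (S x) n.
Proof. intros. destruct x. apply rec_L0; auto. apply rec_LS; auto. Qed.

Lemma amp_L a b ep : 0 < a -> 0 < b -> a * a + b * b = 1 -> ep * ep = 1 -> b - ep <> 0 ->
  forall t x, amp (ll a b ep) (S t) x = a * amp (ll a b ep) t (S x) - b * amp (rr a b ep) t (S x).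
Proof. intros Ha Hb Hab He Hbe t x.
  destruct (Compare_dec.le_lt_dec x t) as [Hle|Hlt].
  - destruct (t - x)%nat as [|d] eqn:Ed.
    + rewrite (amp_in _ (S t) x 1) by lia. rewrite !amp_out by lia. simpl. ring.
    + rewrite (amp_in _ (S t) x (S (S d))) by lia. rewrite !(amp_in _ t (S x) d) by lia.
      rewrite Nat.even_succ_succ. destruct (Nat.even d). simpl Nat.div2. apply rec_L; auto. ring.
  - destruct (Nat.eq_dec x (S t)) as [->|Hne].
    + rewrite amp_diag. rewrite !amp_out by lia. rewrite rec_L_0 by auto. ring.
    + rewrite !amp_out by lia. ring.
Qed.

Lemma amp_R1 a b ep t : amp (rr a b ep) (S t) 1 = ep * amp (ll a b ep) t 0.
Proof. rewrite (amp_in _ (S t) 1 t) by lia. rewrite (amp_in _ t 0 t) by lia. destruct (Nat.even t). apply rec_R1. rewrite Rmult_0_r; reflexivity. Qed.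

Lemma amp_RS a b ep : 0 < b -> forall t y,
  amp (rr a b ep) (S t) (S (S y)) = b * amp (ll a b ep) t (S y) + a * amp (rr a b ep) t (S y).
Proof. intros Hb t y. destruct (Compare_dec.le_lt_dec (S y) t) as [Hle|Hlt].
  - rewrite (amp_in _ (S t) (S (S y)) (t - S y)) by lia. rewrite !(amp_in _ t (S y) (t - S y)) by lia.
    destruct (Nat.even (t - S y)). apply rec_RS; auto. lra.
  - rewrite !amp_out by lia. lra. Qed.

Lemma amp_R0 a b ep t : amp (rr a b ep) t 0 = 0.
Proof. unfold amp. destruct (Nat.leb 0 t); [|reflexivity]. destruct (Nat.even (t - 0)); [|reflexivity].
  simpl rr. unfold s0, cst. destruct (Nat.div2 (t - 0)); reflexivity. Qed.

Lemma corr k g : 0 < a_k k -> 0 < b_k k -> a_k k * a_k k + b_k k * b_k k = 1 ->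
  sin g = 0 -> b_k k - cos g <> 0 ->
  forall t x, fst (Phi k g t) x = (amp (ll (a_k k) (b_k k) (cos g)) t x, 0)
           /\ snd (Phi k g t) x = (amp (rr (a_k k) (b_k k) (cos g)) t x, 0).
Proof.
  intros Ha Hb Hab Hs Hbe.
  assert (He : cos g * cos g = 1). { pose proof (sin2_cos2 g). rewrite Hs in H. unfold Rsqr in H. lra. }
  set (a := a_k k) in *. set (b := b_k k) in *. set (ep := cos g) in *.
  induction t; intros x.
  - simpl. split.
    + destruct x. rewrite amp_diag. simpl ll. rewrite l0_0 by auto. reflexivity.
      rewrite amp_out by lia. reflexivity.
    + destruct x. rewrite amp_R0. reflexivity. rewrite amp_out by lia. reflexivity.
  - simpl Phi. unfold step. destruct (Phi k g t) as [L Rr]. simpl fst in IHt. simpl snd in IHt. split.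
    + simpl fst. destruct (IHt (S x)) as [H1 H2]. rewrite H1, H2. unfold Cadd, Cscal. simpl.
      fold a b. rewrite amp_L by auto. f_equal; ring.
    + simpl snd. destruct x as [|[|y]].
      * rewrite amp_R0. reflexivity.
      * destruct (IHt 0%nat) as [H1 _]. rewrite H1. unfold Cmul, Cexpi. simpl. rewrite Hs. fold ep.
        rewrite amp_R1. f_equal; ring.
      * destruct (IHt (S y)) as [H1 H2]. rewrite H1, H2. unfold Cadd, Cscal. simpl. fold a b.
        rewrite amp_RS by auto. f_equal; ring.
Qed.


Lemma ones_lim G g : HasSum G g -> Un_cv (fun n => (ones * G)%S n) g.
Proof. intros H. apply Un_cv_S in H. eapply Un_cv_ext; [|exact H]. intros n. cbv beta.
  rewrite conv_comm, conv_ones_r. reflexivity. Qed.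

Definition nu (a b ep : R) : R := / (2 * (b - ep)) * ((b + b) - ep * (1 - 1) - ep * (2 * b)).
Definition mu a b := / (2 * a) * ((1 + 1 - 2 * b) - 0).
Definition eta a b := / b * (mu a b - a).

Lemma cd_norm a b : a * a + b * b = 1 -> (a * a - b * b) * (a * a - b * b) + (2 * a * b) * (2 * a * b) = 1.
Proof. intros H. transitivity ((a * a + b * b) * (a * a + b * b)). ring. rewrite H; ring. Qed.

Lemma L1_Dd a b : a * a + b * b = 1 -> L1 (Dd a b).
Proof. intros H. apply L1_DD, cd_norm; auto. Qed.

Lemma L1_NN a b ep : a * a + b * b = 1 -> L1 (NN a b ep).
Proof. intros H. unfold NN. apply L1_scal. apply L1_sub. apply L1_sub. apply L1_plus; apply L1_cst.
  apply L1_scal. apply L1_sub. apply L1_s1. apply L1_X. apply L1_scal. apply L1_Dd; auto. Qed.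

Lemma L1_mm a b : a * a + b * b = 1 -> L1 (mm a b).
Proof. intros H. unfold mm. apply L1_scal, L1_shiftL, L1_sub. apply L1_plus. apply L1_s1. apply L1_X. apply L1_Dd; auto. Qed.

Lemma L1_hh a b : a * a + b * b = 1 -> L1 (hh a b).
Proof. intros H. unfold hh. apply L1_scal, L1_sub. apply L1_mm; auto. apply L1_cst. Qed.

Lemma HS_NN a b ep : 0 < b -> a * a + b * b = 1 -> HasSum (NN a b ep) (nu a b ep).
Proof. intros Hb H. unfold NN, nu. apply HasSum_scal. apply HasSum_sub. apply HasSum_sub. apply HasSum_plus; apply HasSum_cst.
  apply HasSum_scal. apply HasSum_sub. apply HasSum_cst. apply HasSum_X. apply HasSum_scal. apply HasSum_DD; auto. Qed.

Lemma HS_mm a b : 0 < b -> a * a + b * b = 1 -> HasSum (mm a b) (mu a b).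
Proof. intros Hb H. unfold mm, mu.
  replace 0 with ((s1 + X - Dd a b)%S 0%nat). 2:{ unfold ssub, sadd, sopp. unfold Dd; rewrite DD_0. simpl. ring. }
  apply HasSum_scal. apply HasSum_shiftL. apply HasSum_sub. apply HasSum_plus. apply HasSum_cst. apply HasSum_X.
  apply HasSum_DD; auto. Qed.

Lemma HS_hh a b : 0 < b -> a * a + b * b = 1 -> HasSum (hh a b) (eta a b).
Proof. intros Hb H. unfold hh, eta. apply HasSum_scal. apply HasSum_sub. apply HS_mm; auto. apply HasSum_cst. Qed.

Definition LimL a b ep (x : nat) : R := match x with O => nu a b ep | S x' => ep * nu a b ep * mu a b ^ x' * eta a b end.
Definition LimR a b ep (x : nat) : R := match x with O => 0 | S x' => ep * nu a b ep * mu a b ^ x' end.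

Lemma lim_ll a b ep : 0 < b -> a * a + b * b = 1 -> forall x, Un_cv (ll a b ep x) (LimL a b ep x).
Proof. intros Hb H x.
  assert (L1N := L1_NN a b ep H). assert (L1m := L1_mm a b H). assert (L1h := L1_hh a b H).
  assert (HN := HS_NN a b ep Hb H). assert (Hm := HS_mm a b Hb H). assert (Hh := HS_hh a b Hb H).
  destruct x as [|x'].
  - simpl. unfold l0. apply ones_lim. auto.
  - replace (ll a b ep (S x')) with (ones * (cst ep * NN a b ep * spow (mm a b) x' * hh a b))%S.
    2:{ simpl. unfold l0. ring. }
    apply ones_lim. simpl LimL.
    exact (Mertens _ _ _ _ (L1_conv _ _ (L1_conv _ _ (L1_cst ep) L1N) (L1_spow _ x' L1m)) L1h
      (Mertens _ _ _ _ (L1_conv _ _ (L1_cst ep) L1N) (L1_spow _ x' L1m)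
        (Mertens _ _ _ _ (L1_cst ep) L1N (HasSum_cst ep) HN) (HasSum_spow _ _ x' L1m Hm)) Hh).
Qed.

Lemma lim_rr a b ep : 0 < b -> a * a + b * b = 1 -> forall x, Un_cv (rr a b ep x) (LimR a b ep x).
Proof. intros Hb H x.
  assert (L1N := L1_NN a b ep H). assert (L1m := L1_mm a b H).
  assert (HN := HS_NN a b ep Hb H). assert (Hm := HS_mm a b Hb H).
  destruct x as [|x'].
  - simpl. apply (Un_cv_ext (fun _ => 0)). intros [|n]; reflexivity. apply Un_cv_const.
  - replace (rr a b ep (S x')) with (ones * (cst ep * NN a b ep * spow (mm a b) x'))%S.
    2:{ simpl. unfold l0. ring. }
    apply ones_lim. simpl LimR.
    exact (Mertens _ _ _ _ (L1_conv _ _ (L1_cst ep) L1N) (L1_spow _ x' L1m)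
        (Mertens _ _ _ _ (L1_cst ep) L1N (HasSum_cst ep) HN) (HasSum_spow _ _ x' L1m Hm)).
Qed.

Lemma amp_even F j l : Un_cv (F (2 * j)%nat) l -> Un_cv (fun t => amp F (2 * t) (2 * j)) l.
Proof. intros H eps He. destruct (H eps He) as [N HN]. exists (N + j)%nat. intros t Ht.
  rewrite (amp_in _ _ _ (2 * (t - j))) by lia. rewrite Nat.even_even, Nat.div2_double. apply HN; lia. Qed.
Lemma amp_odd F j l : Un_cv (F (2 * j + 1)%nat) l -> Un_cv (fun t => amp F (2 * t + 1) (2 * j + 1)) l.
Proof. intros H eps He. destruct (H eps He) as [N HN]. exists (N + j)%nat. intros t Ht.
  rewrite (amp_in _ _ _ (2 * (t - j))) by lia. rewrite Nat.even_even, Nat.div2_double. apply HN; lia. Qed.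
Lemma amp_eo F t j : amp F (2 * t) (2 * j + 1) = 0.
Proof. destruct (Compare_dec.le_lt_dec (2 * j + 1) (2 * t)).
  rewrite (amp_in _ _ _ (2 * (t - j - 1) + 1)) by lia. rewrite Nat.even_odd. reflexivity. apply amp_out; lia. Qed.
Lemma amp_oe F t j : amp F (2 * t + 1) (2 * j) = 0.
Proof. destruct (Compare_dec.le_lt_dec (2 * j) (2 * t + 1)).
  rewrite (amp_in _ _ _ (2 * (t - j) + 1)) by lia. rewrite Nat.even_odd. reflexivity. apply amp_out; lia. Qed.



Lemma prob_eq k g : 0 < a_k k -> 0 < b_k k -> a_k k * a_k k + b_k k * b_k k = 1 ->
  sin g = 0 -> b_k k - cos g <> 0 -> forall t x,
  prob k g t x = amp (ll (a_k k) (b_k k) (cos g)) t x * amp (ll (a_k k) (b_k k) (cos g)) t x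
               + amp (rr (a_k k) (b_k k) (cos g)) t x * amp (rr (a_k k) (b_k k) (cos g)) t x.
Proof. intros Ha Hb Hab Hs Hbe t x. pose proof (corr k g Ha Hb Hab Hs Hbe t x) as [H1 H2].
  unfold prob. destruct x.
  - rewrite H1, amp_R0. unfold Cnorm2; simpl; ring.
  - rewrite H1, H2. unfold Cnorm2; simpl; ring. Qed.

Lemma gen k g : 0 < a_k k -> 0 < b_k k -> a_k k * a_k k + b_k k * b_k k = 1 ->
  sin g = 0 -> b_k k - cos g <> 0 -> forall j,
  let a := a_k k in let b := b_k k in let ep := cos g in
  Un_cv (fun t => prob k g (2 * t) (2 * j)) (LimL a b ep (2 * j) * LimL a b ep (2 * j) + LimR a b ep (2 * j) * LimR a b ep (2 * j)) /\
  Un_cv (fun t => prob k g (2 * t) (2 * j + 1)) 0 /\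
  Un_cv (fun t => prob k g (2 * t + 1) (2 * j + 1)) (LimL a b ep (2 * j + 1) * LimL a b ep (2 * j + 1) + LimR a b ep (2 * j + 1) * LimR a b ep (2 * j + 1)) /\
  Un_cv (fun t => prob k g (2 * t + 1) (2 * j)) 0.
Proof. intros Ha Hb Hab Hs Hbe j a b ep.
  assert (PE := prob_eq k g Ha Hb Hab Hs Hbe).
  assert (LL := lim_ll a b ep Hb Hab). assert (LR := lim_rr a b ep Hb Hab).
  repeat split.
  - eapply Un_cv_ext. intros t; symmetry; apply PE.
    apply CV_plus; apply CV_mult; apply amp_even; auto.
  - apply (Un_cv_ext (fun _ => 0)). intros t. rewrite PE, !amp_eo. ring. apply Un_cv_const.
  - eapply Un_cv_ext. intros t; symmetry; apply PE.
    apply CV_plus; apply CV_mult; apply amp_odd; auto.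
  - apply (Un_cv_ext (fun _ => 0)). intros t. rewrite PE, !amp_oe. ring. apply Un_cv_const.
Qed.


Lemma valS (ep nu mu eta K : R) x' : ep * ep = 1 -> mu * mu = 1 / (K - 1) -> eta = - mu -> K - 1 <> 0 ->
  (ep * nu * mu ^ x' * eta) * (ep * nu * mu ^ x' * eta) + (ep * nu * mu ^ x') * (ep * nu * mu ^ x')
  = nu * nu * K * (1 / (K - 1)) ^ (S x').
Proof. intros He Hm Het HK. subst eta.
  transitivity ((ep * ep) * (nu * nu) * ((mu * mu) ^ x') * (mu * mu + 1)).
  rewrite Rpow_mult_distr. ring. rewrite He, Hm. simpl pow. field. auto. Qed.

Lemma LimA a b x : LimL a b 1 x = 0 /\ LimR a b 1 x = 0.
Proof. assert (nu a b 1 = 0) by (unfold nu; ring). destruct x; simpl; rewrite H; split; ring. Qed.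

Lemma cv_eq f l1 l2 : Un_cv f l1 -> l1 = l2 -> Un_cv f l2.
Proof. intros H ->; exact H. Qed.

Theorem theorem1 (k : nat) (hk : (3 <= k)%nat) :
  (forall x : nat,
      Un_cv (fun t => prob k 0 (2 * t) x) 0 /\
      Un_cv (fun t => prob k 0 (2 * t + 1) x) 0) /\
  (forall x : nat,
      Un_cv (fun t => prob k PI (2 * t) x) (PE_B k x) /\
      Un_cv (fun t => prob k PI (2 * t + 1) x) (PO_B k x)).
Proof.
  set (K := INR k).
  assert (HK3 : 3 <= K) by (unfold K; apply le_INR in hk; simpl in hk; lra).
  set (s := sqrt (K - 1)).
  assert (Hss : s * s = K - 1) by (unfold s; apply sqrt_sqrt; lra).
  assert (Hs1 : 1 < s). { destruct (Rle_lt_dec s 1); auto. assert (0 <= s) by (unfold s; apply sqrt_pos). nra. }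
  assert (HKs : K = s * s + 1) by lra.
  assert (Ea : a_k k = 2 * s / (s * s + 1)) by (unfold a_k; fold K; fold s; rewrite <- HKs; reflexivity).
  assert (Eb : b_k k = 1 - 2 / (s * s + 1)) by (unfold b_k; fold K; rewrite <- HKs; reflexivity).
  assert (Ha : 0 < a_k k). { rewrite Ea. apply Rdiv_lt_0_compat; nra. }
  assert (Hb : 0 < b_k k). { rewrite Eb. assert (2 / (s * s + 1) < 1). { apply Rmult_lt_reg_r with (s * s + 1). nra. unfold Rdiv. rewrite Rmult_assoc, Rinv_l by nra. nra. } lra. }
  assert (Hb1 : b_k k < 1). { rewrite Eb. assert (0 < 2 / (s * s + 1)) by (apply Rdiv_lt_0_compat; nra). lra. }
  assert (Hab : a_k k * a_k k + b_k k * b_k k = 1). { rewrite Ea, Eb. field. nra. }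
  assert (Hmu : mu (a_k k) (b_k k) = 1 / s). { unfold mu. rewrite Ea, Eb. field. nra. }
  assert (Heta : eta (a_k k) (b_k k) = - mu (a_k k) (b_k k)). { unfold eta. rewrite Hmu, Ea, Eb. field. split; nra. }
  assert (Hmm : mu (a_k k) (b_k k) * mu (a_k k) (b_k k) = 1 / (K - 1)). { rewrite Hmu, <- Hss. field. nra. }
  assert (HK1 : K - 1 <> 0) by lra.
  split; intros x.
  - assert (Hbe : b_k k - cos 0 <> 0) by (rewrite cos_0; lra).
    destruct (Nat.Even_or_Odd x) as [[j ->]|[j ->]];
    destruct (gen k 0 Ha Hb Hab sin_0 Hbe j) as [G1 [G2 [G3 G4]]]; cbv zeta in *; rewrite cos_0 in *.
    + split; auto. destruct (LimA (a_k k) (b_k k) (2 * j)) as [E1 E2]. rewrite E1, E2 in G1.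
      replace (0 * 0 + 0 * 0) with 0 in G1 by ring. exact G1.
    + split; auto. destruct (LimA (a_k k) (b_k k) (2 * j + 1)) as [E1 E2]. rewrite E1, E2 in G3.
      replace (0 * 0 + 0 * 0) with 0 in G3 by ring. exact G3.
  - assert (Hbe : b_k k - cos PI <> 0) by (rewrite cos_PI; lra).
    assert (Hnu : nu (a_k k) (b_k k) (-1) = (K - 2) / (K - 1)).
    { unfold nu. rewrite Eb, HKs. field. nra. }
    assert (He : -1 * -1 = 1) by ring.
    destruct (Nat.Even_or_Odd x) as [[j ->]|[j ->]];
    destruct (gen k PI Ha Hb Hab sin_PI Hbe j) as [G1 [G2 [G3 G4]]]; cbv zeta in *; rewrite cos_PI in *.
    + unfold PE_B, PO_B. rewrite Nat.even_even. split; auto.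
      destruct j as [|j'].
      * simpl LimL in G1. simpl LimR in G1. rewrite Hnu in G1. eapply cv_eq; [exact G1|]. simpl. fold K. field. auto.
      * replace (2 * S j')%nat with (S (2 * j' + 1)) in * by lia. simpl LimL in G1. simpl LimR in G1.
        rewrite (valS (-1) _ _ _ K) in G1 by auto. rewrite Hnu in G1. eapply cv_eq; [exact G1|].
        simpl delta0. fold K. simpl pow. field. auto.
    + unfold PE_B, PO_B. replace (Nat.even (2 * j + 1)) with false by (rewrite Nat.even_odd; reflexivity). split; auto.
      replace (2 * j + 1)%nat with (S (2 * j)) in * by lia. simpl LimL in G3. simpl LimR in G3.
      rewrite (valS (-1) _ _ _ K) in G3 by auto. rewrite Hnu in G3. eapply cv_eq; [exact G3|]. fold K. simpl pow. field. auto.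
Qed.
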